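(* Let $a_1,\dots,a_m$ be vectors in $\mathbb R^n$ equipped with a Euclidean norm $\lVert\cdot\rVert$, and suppose $\mathrm{MinHeight}(a_1,\dots,a_m)>0$. Then every $w\in\mathrm{span}(a_1,\dots,a_m)$ can be written as $w=\lambda_1a_1+\dots+\lambda_ma_m$ with $|\lambda_j|\le \lVert w\rVert/\mathrm{MinHeight}(a_1,\dots,a_m)$ for every $j\in\{1,\dots,m\}$.
   Context: $\mathrm{MinHeight}(a_1,\dots,a_m):=\min_{j}\,d\big(a_j,\mathrm{span}(a_1,\dots,\widehat{a}_j,\dots,a_m)\big)$, where $d$ is the distance induced by $\lVert\cdot\rVert$ and $\widehat a_j$ means $a_j$ is omitted. *)

(* Defs.v *)
From HB Require Import structures.
From mathcomp Require Import all_boot all_order all_algebra.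
From mathcomp Require Import boolp classical_sets reals.
Set Implicit Arguments. Unset Strict Implicit. Unset Printing Implicit Defensive.
Import Order.TTheory GRing.Theory Num.Theory.
Local Open Scope ring_scope.
Local Open Scope classical_set_scope.

Definition normE {R : realType} {n : nat} (v : 'rV[R]_n) : R :=
  Num.sqrt (\sum_(i < n) v 0 i ^+ 2).

Definition span_of {R : realType} {n m : nat} (a : 'I_m -> 'rV[R]_n) : set 'rV[R]_n :=
  [set w | exists c : 'I_m -> R, w = \sum_(k < m) c k *: a k].

Definition span_others {R : realType} {n m : nat} (a : 'I_m -> 'rV[R]_n) (j : 'I_m)
  : set 'rV[R]_n :=
  [set y | exists c : 'I_m -> R, y = \sum_(k < m | k != j) c k *: a k].

Definition dist_set {R : realType} {n : nat} (x : 'rV[R]_n) (S : set 'rV[R]_n) : R :=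
  inf [set normE (x - y) | y in S].

Definition MinHeight {R : realType} {n m : nat} (a : 'I_m -> 'rV[R]_n) : R :=
  inf [set dist_set (a j) (span_others a j) | j in [set: 'I_m]].

(* Main.v *)
Require Import Defs.
From HB Require Import structures.
From mathcomp Require Import all_boot all_order all_algebra.
From mathcomp Require Import boolp classical_sets reals.
Import Order.TTheory GRing.Theory Num.Theory.
Local Open Scope ring_scope.

Lemma normE_ge0 (R : realType) n (v : 'rV[R]_n) : 0 <= normE v.
Proof. exact: sqrtr_ge0. Qed.

Lemma normEZ (R : realType) n (l : R) (v : 'rV[R]_n) : normE (l *: v) = `|l| * normE v.
Proof.
rewrite /normE -sqrtr_sqr -sqrtrM ?sqr_ge0 //; congr Num.sqrt.
rewrite mulr_sumr; apply: eq_bigr => i _; rewrite mxE; by rewrite exprMn.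
Qed.

Lemma dist_ge0 (R : realType) n (x : 'rV[R]_n) S : 0 <= dist_set x S.
Proof.
rewrite /dist_set.
have [->|/set0P [y Sy]] := eqVneq S set0.
  by rewrite image_set0 inf0.
apply: lb_le_inf; first by exists (normE (x - y)), y.
by move=> z [y' _ <-]; apply: normE_ge0.
Qed.

Lemma dist_le (R : realType) n (x y : 'rV[R]_n) (S : set 'rV[R]_n) : S y ->
  dist_set x S <= normE (x - y).
Proof.
move=> Sy; apply: ge_inf; last by exists y.
by exists 0 => z [y' _ <-]; apply: normE_ge0.
Qed.

Lemma MH_le (R : realType) n m (a : 'I_m -> 'rV[R]_n) j :
  MinHeight a <= dist_set (a j) (span_others a j).
Proof.
apply: ge_inf; last by exists j.
by exists 0 => z [k _ <-]; apply: dist_ge0.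
Qed.

Theorem mainTheorem7 (R : realType) (n m : nat) (a : 'I_m -> 'rV[R]_n) :
  0 < MinHeight a ->
  forall w : 'rV[R]_n, span_of a w ->
  exists lam : 'I_m -> R,
    w = \sum_(j < m) lam j *: a j /\
    (forall j : 'I_m, `|lam j| <= normE w / MinHeight a).
Proof.
move=> hM w [c ->]; exists c; split => // j.
rewrite ler_pdivlMr //.
have [c0|cn0] := eqVneq (c j) 0.
  by rewrite c0 normr0 mul0r normE_ge0.
pose y := \sum_(k < m | k != j) (- c k / c j) *: a k.
have Sy : span_others a j y by exists (fun k => - c k / c j).
have -> : \sum_(k < m) c k *: a k = c j *: (a j - y).
  rewrite (bigD1 j) //= scalerBr /y scaler_sumr -sumrN; congr (_ + _).
  apply: eq_bigr => k _; rewrite scalerA mulrCA divff // mulr1 scaleNr opprK //.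
rewrite normEZ; apply: ler_wpM2l => //.

have h1 := @MH_le _ _ _ a j. have h2 := @dist_le _ _ (a j) _ _ Sy. exact: (le_trans h1 h2).
Qed.
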